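(* Let $I$ be an infinite set of positive integers and for $i \in I$ let $G_i$ be a finite group and $H_i \le G_i$ a subgroup, with $|G_i| \to \infty$. Suppose there is a constant $c>0$ with $|H_i| \le (\log|G_i|)^c$ for all $i \in I$. Then the family $(G_i,H_i)_{i \in I}$ is distinguishable if and only if there is a constant $c'>0$ such that, for all sufficiently large $i \in I$, $H_i$ contains a non-identity element $h$ whose conjugacy class $h^{G_i}$ in $G_i$ satisfies $|h^{G_i}| \le (\log|G_i|)^{c'}$.
   Context: For a finite group $G$, let $\mathrm{Irr}(G)$ be its set of complex irreducible characters and $d_\chi=\chi(e)$. For $H \le G$ let $D_H = \frac{1}{|G|}\sum_{\chi \in \mathrm{Irr}(G)} d_\chi \big|\sum_{h \in H, h \neq e}\chi(h)\big|$ (the $L_1$ distance between the distributions $P_H(\chi)=\frac{d_\chi}{|G|}\sum_{h\in H}\chi(h)$ and $P_{\{e\}}$ on $\mathrm{Irr}(G)$ produced by weak quantum Fourier sampling). A family $(G_i,H_i)_{i \in I}$ with $H_i \le G_i$, $I$ an infinite set of positive integers and $|G_i| \to \infty$, is called distinguishable if there is a constant $c''>0$ such that $D_{H_i} \ge (\log|G_i|)^{-c''}$ for all sufficiently large $i \in I$, and indistinguishable otherwise. *)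

(* Defs.v *)
From HB Require Import structures.
From mathcomp Require Import all_boot all_order all_algebra all_fingroup all_solvable all_field all_character.
From mathcomp Require Import all_classical all_reals all_analysis.
Set Implicit Arguments. Unset Strict Implicit. Unset Printing Implicit Defensive.
Import Order.TTheory GRing.Theory Num.Theory.
Local Open Scope ring_scope.
Local Open Scope classical_set_scope.

Definition DH (gT : finGroupType) (G H : {group gT}) : algC :=
  (#|G|%:R)^-1 *
  \sum_(i : Iirr G) ('chi[G]_i 1%g * `| \sum_(h in H | h != 1%g) 'chi[G]_i h |).

(* Embedding of (real) algebraic complex numbers into a realType R:
   the supremum of the rationals below x (equals x when x is real). *)
Definition algC_to_real (R : realType) (x : algC) : R :=
  sup ((fun q : rat => (ratr q : R)) @` [set q : rat | (ratr q : algC) <= x]).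

Definition distinguishable (R : realType) (gT : nat -> finGroupType)
  (G H : forall i, {group gT i}) (I : set nat) : Prop :=
  exists c2 : R, 0 < c2 /\
    exists N : nat, forall i : nat, I i -> (N <= i)%N ->
      ln (#|G i|%:R : R) `^ (- c2) <= algC_to_real R (DH (G i) (H i)).

(* Main.v *)
Require Import Defs.
From HB Require Import structures.
From mathcomp Require Import all_boot all_order all_algebra all_fingroup all_solvable all_field all_character.
From mathcomp Require Import all_classical all_reals all_analysis.
From mathcomp Require Import ring lra.
Set Implicit Arguments. Unset Strict Implicit. Unset Printing Implicit Defensive.
Import Order.TTheory GRing.Theory Num.Theory.
Local Open Scope ring_scope.

Section AlgC.
Variables (gT : finGroupType) (G H : {group gT}).
Hypothesis sHG : H \subset G.

Lemma sumsq_chi x : x \in G ->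
  \sum_(i : Iirr G) `|'chi[G]_i x| ^+ 2 = #|('C_G[x])%g|%:R.
Proof.
move=> Gx; have := second_orthogonality_relation x Gx.
rewrite class_refl mulr1n => <-.
by apply: eq_bigr => i _; rewrite normCK.
Qed.

Lemma card_G_cent x : (#|G|%:R : algC) = #|('C_G[x])%g|%:R * #|(x ^: G)%g|%:R.
Proof. by rewrite -natrM -index_cent1 Lagrange // subsetIl. Qed.

Lemma DH_ge0 : 0 <= DH G H.
Proof.
rewrite /DH mulr_ge0 ?invr_ge0 ?ler0n //.
apply: sumr_ge0 => i _; rewrite mulr_ge0 //; exact: ltW (irr1_gt0 i).
Qed.

Lemma DH_lower x : x \in H -> x != 1%g -> (#|(x ^: G)%g|%:R)^-1 <= DH G H.
Proof.
move=> Hx nx1; have Gx : x \in G := fintype.subsetP sHG x Hx.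
pose f i := \sum_(h in H | h != 1%g) 'chi[G]_i h.
have key : (#|('C_G[x])%g|%:R : algC) <= \sum_(i : Iirr G) 'chi[G]_i 1%g * `|f i|.
  apply: (le_trans _ (_ : \sum_i `|f i * ('chi[G]_i x)^*| <= _)); last first.
    apply: ler_sum => i _; rewrite normrM norm_conjC mulrC.
    by rewrite ler_wpM2r ?normr_ge0 // char1_ge_norm ?irr_char.
  apply: le_trans (ler_norm_sum _ _ _).
  have -> : \sum_i f i * ('chi[G]_i x)^* =
      \sum_(h in H | h != 1%g) (#|('C_G[h])%g|%:R *+ (h \in (x ^: G)%g) : algC).
    rewrite /f; under eq_bigr do rewrite mulr_suml.
    rewrite exchange_big /=; apply: eq_bigr => h _.
    by rewrite second_orthogonality_relation.
  rewrite (bigD1 x) /=; last by rewrite Hx.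
  rewrite class_refl mulr1n ger0_norm; last first.
    by rewrite addr_ge0 ?sumr_ge0 // => h _; rewrite mulrn_wge0.
  by rewrite lerDl sumr_ge0 // => h _; rewrite mulrn_wge0.
have Gpos : (0 : algC) < #|G|%:R by rewrite ltr0n cardG_gt0.
have Cpos : (0 : algC) < #|('C_G[x])%g|%:R by rewrite ltr0n cardG_gt0.
rewrite /DH -/f; apply: le_trans (ler_wpM2l _ key); last by rewrite invr_ge0 ltW.
rewrite (card_G_cent x) invfM mulrAC mulVf ?mul1r //; by rewrite gt_eqF.
Qed.

Lemma S_bound t h : 0 < t -> h \in G ->
  (\sum_(i : Iirr G) 'chi[G]_i 1%g * `|'chi[G]_i h|) * (2 * t)
   <= t ^+ 2 * #|G|%:R + #|('C_G[h])%g|%:R.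
Proof.
move=> t0 Gh.
have -> : (#|G|%:R : algC) = #|('C_G[1%g])%g|%:R by rewrite cent11T finset.setIT.
rewrite -!sumsq_chi // ?group1 // mulr_suml mulr_sumr -big_split /=.
apply: ler_sum => i _.
have c0 : 0 <= 'chi[G]_i 1%g by exact: ltW (irr1_gt0 i).
have rx : t * 'chi[G]_i 1%g \is Num.real by apply: rpredM; [exact: gtr0_real | exact: ger0_real].
have [le _] := real_leif_mean_square_scaled rx (normr_real ('chi[G]_i h)).
rewrite [`|'chi[G]_i 1%g|]ger0_norm //.
have -> : 'chi[G]_i 1%g * `|'chi[G]_i h| * (2 * t) = t * 'chi[G]_i 1%g * `|'chi[G]_i h| *+ 2 by rewrite mulr_natl; ring.
have -> : t ^+ 2 * 'chi[G]_i 1%g ^+ 2 = (t * 'chi[G]_i 1%g) ^+ 2 by rewrite exprMn.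
exact: le.
Qed.

Lemma DH_upper t : 0 < t ->
  DH G H <= \sum_(h in H | h != 1%g) (t / 2 + (2 * t * #|(h ^: G)%g|%:R)^-1).
Proof.
move=> t0.
have Gpos : (0 : algC) < #|G|%:R by rewrite ltr0n cardG_gt0.
pose S h := \sum_(i : Iirr G) 'chi[G]_i 1%g * `|'chi[G]_i h|.
apply: (le_trans (y := #|G|%:R^-1 * \sum_(h in H | h != 1%g) S h)).
  rewrite /DH; apply: ler_wpM2l; first by rewrite invr_ge0 ltW.
  rewrite /S exchange_big /=; apply: ler_sum => i _.
  rewrite -mulr_sumr; apply: ler_wpM2l; [exact: ltW (irr1_gt0 i) | exact: ler_norm_sum].
rewrite mulr_sumr; apply: ler_sum => h /andP [Hh _].
have Gh : h \in G := fintype.subsetP sHG h Hh.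
have Cpos : (0 : algC) < #|('C_G[h])%g|%:R by rewrite ltr0n cardG_gt0.
have kpos : (0 : algC) < #|(h ^: G)%g|%:R.
  by rewrite ltr0n card_gt0; apply/set0Pn; exists h; exact: class_refl.
have p : 0 < 2 * t * #|G|%:R by rewrite !mulr_gt0.
rewrite -(ler_pM2r p).
have -> : #|G|%:R^-1 * S h * (2 * t * #|G|%:R) = S h * (2 * t).
  by field; rewrite gt_eqF.
have -> : (t / 2 + (2 * t * #|(h ^: G)%g|%:R)^-1) * (2 * t * #|G|%:R)
    = t ^+ 2 * #|G|%:R + #|('C_G[h])%g|%:R.
  rewrite (card_G_cent h); field; rewrite !gt_eqF //.
exact: S_bound.
Qed.
End AlgC.
Section Transfer.
Variable R : realType.

Lemma LA (x : algC) (q p : rat) : (ratr q : algC) <= x -> x <= ratr p ->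
  (ratr q : R) <= algC_to_real R x.
Proof.
move=> qx xp; rewrite /algC_to_real; apply: ub_le_sup; last by exists q.
exists (ratr p) => _ [r /= rx <-]; rewrite ler_rat.
by rewrite -(ler_rat algC); apply: le_trans xp.
Qed.

Lemma LB (x : algC) (q p : rat) : (ratr q : algC) <= x -> x <= ratr p ->
  algC_to_real R x <= ratr p.
Proof.
move=> qx xp; rewrite /algC_to_real; apply: ge_sup; first by exists (ratr q), q.
move=> _ [r /= rx <-]; rewrite ler_rat.
by rewrite -(ler_rat algC); apply: le_trans xp.
Qed.
End Transfer.

Definition Qs (gT : finGroupType) (G H : {group gT}) (q : rat) : rat :=
  \sum_(h in H | h != 1%g) (q / 2 + (2 * q * #|(h ^: G)%g|%:R)^-1).

Lemma ratr_Qs (F : numFieldType) (gT : finGroupType) (G H : {group gT}) q :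
  (ratr (Qs G H q) : F) =
  \sum_(h in H | h != 1%g) (ratr q / 2 + (2 * ratr q * #|(h ^: G)%g|%:R)^-1).
Proof.
rewrite /Qs rmorph_sum; apply: eq_bigr => h _.
by rewrite rmorphD rmorphM !fmorphV !rmorphM !rmorph_nat.
Qed.

Lemma DH_upperQ (gT : finGroupType) (G H : {group gT}) (q : rat) :
  H \subset G -> 0 < q -> DH G H <= ratr (Qs G H q).
Proof.
move=> sHG q0; rewrite ratr_Qs; apply: DH_upper => //; by rewrite ltr0q.
Qed.

Unset Implicit Arguments.
Local Open Scope classical_set_scope.

Theorem theorem6 (R : realType) (I : set nat) (gT : nat -> finGroupType)
  (G H : forall i, {group gT i})
  (I_inf : infinite_set I)
  (I_pos : forall i, I i -> (0 < i)%N)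
  (HsubG : forall i, I i -> H i \subset G i)
  (G_unbounded : forall M : nat, exists N : nat,
      forall i, I i -> (N <= i)%N -> (M <= #|G i|)%N)
  (c : R) (c_pos : 0 < c)
  (H_small : forall i, I i -> (#|H i|%:R : R) <= ln (#|G i|%:R : R) `^ c) :
  distinguishable R G H I <->
  exists c1 : R, 0 < c1 /\
    exists N : nat, forall i, I i -> (N <= i)%N ->
      exists2 h : gT i, h \in H i &
        (h != 1%g) /\ (#|(h ^: G i)%g|%:R : R) <= ln (#|G i|%:R : R) `^ c1.
Proof.
split; last first.
  move=> [c1 [c1p [N hN]]]; exists c1; split => //; exists N => i Ii Ni.
  have [h Hh [nh1 hk]] := hN i Ii Ni.
  have sHG := HsubG i Ii.
  have kpos : (0 < #|(h ^: G i)%g|)%N.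
    by rewrite card_gt0; apply/set0Pn; exists h; exact: class_refl.
  have low := DH_lower sHG Hh nh1.
  have up := @DH_upperQ _ _ _ 1 sHG ltr01.
  have := @LA R _ (#|(h ^: G i)%g|%:R^-1) _ _ up.
  rewrite fmorphV rmorph_nat => /(_ low) H1.
  apply: le_trans H1.
  have kR : (0 : R) < #|(h ^: G i)%g|%:R by rewrite ltr0n.
  rewrite fmorphV rmorph_nat powRN lef_pV2 ?posrE //; exact: lt_le_trans hk.
move=> [c2 [c2p [N hN]]].
pose a := c + c2 + 1.
have ap : 0 < a by rewrite /a; lra.
exists (a + a); split; first lra.
have [N2 hN2] := G_unbounded (Num.Def.archi_bound (expR 3 : R)).
exists (maxn N N2) => i Ii; rewrite geq_max => /andP [Ni N2i].
case: (pselect (exists2 h : gT i, h \in H i &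
   (h != 1%g) /\ (#|(h ^: G i)%g|%:R : R) <= ln (#|G i|%:R : R) `^ (a + a))) => // Hno.
exfalso.
set L := ln (#|G i|%:R : R).
have L3 : 3 <= L.
  have e3 : (0 : R) < expR 3 by exact: expR_gt0.
  have := archi_boundP (ltW e3); move: (hN2 i Ii N2i).
  rewrite -(ler_nat R) => h1 h2.
  rewrite /L -[3 in X in X <= _](expRK (3 : R)) ler_ln ?posrE //.
    by apply: ltW; apply: lt_le_trans h1.
  by apply: lt_trans e3 (lt_le_trans h2 h1).
have L0 : 0 < L by lra.
have big : forall h, h \in H i -> h != 1%g -> L `^ (a + a) < #|(h ^: G i)%g|%:R.
  move=> h Hh nh; rewrite ltNge; apply/negP => hk; apply: Hno; exists h => //.
have := hN i Ii Ni; rewrite -/L; apply/negP; rewrite -ltNge.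
pose P := L `^ a.
have P0 : 0 < P by exact: powR_gt0.
pose t0 := P^-1.
have t00 : 0 < t0 by rewrite invr_gt0.
have t02 : t0 < 2 * t0 by lra.
have [q] := rat_in_itvoo t02; rewrite in_itv /= => /andP [q1 q2].
have q0 : 0 < q by rewrite -(ltr0q R); apply: lt_trans q1.
have sHG := HsubG i Ii.
have up := DH_upperQ sHG q0.
have := @LB R _ 0 _ _ up; rewrite rmorph0 => /(_ (DH_ge0 _ _)).
move/le_lt_trans; apply.
rewrite ratr_Qs.
set t := (ratr q : R).
have Lnz : (L != 0) by rewrite gt_eqF.
have pD : forall r s : R, L `^ (r + s) = L `^ r * L `^ s.
  by move=> r s; rewrite powRD // Lnz implybT.
have tP : 1 < t * P.
  have e : t0 * P = 1 by rewrite /t0 mulVf // lt0r_neq0.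
  rewrite -e; by rewrite ltr_pM2r.
have term : forall h, h \in H i -> h != 1%g ->
    t / 2 + (2 * t * #|(h ^: G i)%g|%:R)^-1 <= 2 * t0.
  move=> h Hh nh; have := big h Hh nh; rewrite pD -/P => kb.
  set k := (#|(h ^: G i)%g|%:R : R) in kb *.
  have k0 : 0 < k by apply: lt_trans kb; apply: mulr_gt0.
  have t0' : 0 < t by apply: lt_trans q1.
  have le1 : (2 * t * k)^-1 <= (2 * P)^-1.
    have h1 : 0 < 2 * t * k by apply: mulr_gt0 => //; apply: mulr_gt0.
    have h2 : 0 < 2 * P by apply: mulr_gt0.
    rewrite lef_pV2 ?posrE //.
    have : t * P * P <= t * k by rewrite -mulrA ler_pM2l // ltW.
    nra.
  have : (2 * P)^-1 = t0 / 2 by rewrite /t0; field; rewrite gt_eqF.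
  move=> e; rewrite e in le1; lra.
apply: (le_lt_trans (y := \sum_(h in H i) 2 * t0)).
  apply: le_trans (_ : \sum_(h in H i | h != 1%g) 2 * t0 <= _).
    by apply: ler_sum => h /andP [Hh nh]; exact: term.
  rewrite [X in _ <= X](bigID (fun h => h != 1%g)) /= lerDl.
  by apply: sumr_ge0 => h _; rewrite mulr_ge0 // ltW.
rewrite sumr_const.
have -> : 2 * t0 *+ #|H i| = 2 * t0 * #|H i|%:R by rewrite mulr_natr.
have Hs := H_small i Ii; rewrite -/L in Hs.
set A := L `^ c in Hs.
set B := L `^ c2.
have A0 : 0 < A by exact: powR_gt0.
have B0 : 0 < B by exact: powR_gt0.
have PE : P = A * B * L by rewrite /P /a !pD powRr1 // ltW.
apply: (le_lt_trans (y := 2 * t0 * A)).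
  by rewrite ler_pM2l //; apply: mulr_gt0.
rewrite powRN -/B /t0 PE.
have -> : 2 * (A * B * L)^-1 * A = (2 / L) * B^-1 by field; rewrite !gt_eqF.
rewrite -[X in _ < X]mul1r ltr_pM2r ?invr_gt0 //.
by rewrite ltr_pdivrMr // mul1r; lra.
Qed.
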